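(* Let $f$ be a multiplicative function from the positive integers to the nonnegative integers with $f(p^{k-1})\le f(p^k)$ for all primes $p$ and integers $k\ge1$. Let $n$ be $f$-practical, let $p$ be a prime with $\gcd(p,n)=1$, and let $k\ge1$. Then $np^k$ is $f$-practical if and only if $f(p^i)\le S_f(np^{i-1})+1$ for all $1\le i\le k$.
   Context: $f$ multiplicative means $f(1)=1$ and $f(ab)=f(a)f(b)$ for coprime $a,b$. $S_f(n)=\sum_{d\mid n} f(d)$. A positive integer $n$ is $f$-practical if every positive integer $m\le S_f(n)$ equals $\sum_{d\in\mathcal{D}}f(d)$ for some set $\mathcal{D}$ of distinct divisors of $n$. *)

(* Defs.v *)
From mathcomp Require Import all_boot.
Set Implicit Arguments. Unset Strict Implicit. Unset Printing Implicit Defensive.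

(* f : positive integers -> nonnegative integers, modelled as nat -> nat;
   the value f 0 is irrelevant and never constrained. *)
Definition multiplicative (f : nat -> nat) : Prop :=
  f 1 = 1 /\
  forall a b, 0 < a -> 0 < b -> coprime a b -> f (a * b) = f a * f b.

Definition S_f (f : nat -> nat) (n : nat) : nat :=
  \sum_(d <- divisors n) f d.

Definition f_practical (f : nat -> nat) (n : nat) : Prop :=
  forall m, 0 < m -> m <= S_f f n ->
    exists D : seq nat,
      [/\ uniq D, all (fun d => d \in divisors n) D & \sum_(d <- D) f d = m].

(* Main.v *)
Require Import Defs.
From mathcomp Require Import all_boot.
From mathcomp Require Import zify.

Lemma decomp n p j x : prime p -> coprime p n -> 0 < n -> x %| n * p ^ j ->
  exists a e, [/\ x = a * p ^ e, a %| n & e <= j].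
Proof.
move=> pp cop n0 xd.
have x0 : 0 < x by apply: dvdn_gt0 xd; rewrite muln_gt0 n0 expn_gt0 prime_gt0.
have [m cpm xE] := pfactor_coprime pp x0.
exists m, (logn p x); split => //.
  have : m %| n * p ^ j by apply: dvdn_trans xd; rewrite [X in _ %| X]xE dvdn_mulr.
  by rewrite Gauss_dvdl // coprime_sym coprimeXl.
have : p ^ logn p x %| n * p ^ j by apply: dvdn_trans xd; apply: pfactor_dvdnn.
by rewrite Gauss_dvdr ?coprimeXl // dvdn_Pexp2l // prime_gt1.
Qed.

Lemma mem2 n p j a e : prime p -> coprime p n -> a %| n ->
  (a * p ^ e %| n * p ^ j) = (e <= j).
Proof.
move=> pp cop an; apply/idP/idP => [H|H]; last by rewrite dvdn_mul // dvdn_exp2l.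
have : p ^ e %| n * p ^ j by apply: dvdn_trans H; rewrite dvdn_mull.
by rewrite Gauss_dvdr ?coprimeXl // dvdn_Pexp2l // prime_gt1.
Qed.

Lemma fmulp (f : nat -> nat) n p a e : multiplicative f -> prime p ->
  coprime p n -> 0 < n -> a %| n -> f (a * p ^ e) = f a * f (p ^ e).
Proof.
move=> [_ fM] pp cop n0 an; apply: fM; first exact: dvdn_gt0 an.
  by rewrite expn_gt0 prime_gt0.
by rewrite coprimeXr // coprime_sym (coprime_dvdr an).
Qed.

Lemma Srec (f : nat -> nat) n p j : multiplicative f -> prime p ->
  coprime p n -> 0 < n ->
  S_f f (n * p ^ j.+1) = S_f f (n * p ^ j) + f (p ^ j.+1) * S_f f n.
Proof.
move=> fm pp cop n0.
have pj0 : 0 < p ^ j.+1 by rewrite expn_gt0 prime_gt0.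
have N0 : forall i, 0 < n * p ^ i by move=> i; rewrite muln_gt0 n0 expn_gt0 prime_gt0.
have Hp : perm_eq (divisors (n * p ^ j.+1))
   (divisors (n * p ^ j) ++ map (fun d => d * p ^ j.+1) (divisors n)).
  apply: uniq_perm; first exact: divisors_uniq.
    rewrite cat_uniq divisors_uniq /=; apply/andP; split.
      apply/hasPn => y /mapP [d dn ->].
      rewrite -dvdn_divisors // mem2 // ?dvdn_divisors //.
      by rewrite ltnn.
    rewrite map_inj_uniq ?divisors_uniq // => a b /eqP.
    by rewrite eqn_pmul2r // => /eqP.
  move=> x; rewrite mem_cat -!dvdn_divisors //; apply/idP/idP => [H|].
    have [a [e [xE an ej]]] := @decomp n p j.+1 x pp cop n0 H.
    move: ej; rewrite leq_eqVlt ltnS => /orP [/eqP ej|ej].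
      apply/orP; right; apply/mapP; exists a; first by rewrite -dvdn_divisors.
      by rewrite xE ej.
    by rewrite xE mem2 // ej.
  case/orP => [H|/mapP [d dn ->]].
    by apply: dvdn_trans H _; rewrite dvdn_mul // dvdn_exp2l.
  by rewrite dvdn_mul // dvdn_divisors.
rewrite /S_f (perm_big _ Hp) big_cat /= big_map; congr (_ + _).
rewrite mulnC big_distrl /= big_seq [in RHS]big_seq; apply: eq_bigr => d dn.
by rewrite (@fmulp f n p d j.+1 fm pp cop n0) // dvdn_divisors.
Qed.

Lemma le_mem (f : nat -> nat) (s : seq nat) x : x \in s -> f x <= \sum_(d <- s) f d.
Proof. by move=> xs; rewrite (big_rem x) ?leq_addr. Qed.

Lemma rep (f : nat -> nat) N m : f_practical f N -> m <= S_f f N ->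
  exists D : seq nat,
    [/\ uniq D, all (fun d => d \in divisors N) D & \sum_(d <- D) f d = m].
Proof.
move=> H; case: (posnP m) => [-> _|m0 mS]; last exact: H.
by exists [::]; rewrite big_nil.
Qed.

Lemma sum_sub (f : nat -> nat) (D s : seq nat) : uniq D -> uniq s ->
  {subset D <= s} -> \sum_(d <- D) f d <= \sum_(d <- s) f d.
Proof.
move=> uD us sub.
exact: (@uniq_sub_le_big _ addn leq leqnn (fun a b => leq_addr b a) 0 _ D s xpredT f uD us sub).
Qed.

Theorem theorem2p5 (f : nat -> nat) (n p k : nat) :
  multiplicative f ->
  (forall q j, prime q -> 1 <= j -> f (q ^ j.-1) <= f (q ^ j)) ->
  0 < n ->
  f_practical f n ->
  prime p -> coprime p n -> 1 <= k ->
  (f_practical f (n * p ^ k) <->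
   (forall i, 1 <= i <= k -> f (p ^ i) <= S_f f (n * p ^ i.-1) + 1)).
Proof.
move=> fm fmono n0 prn pp cop k1.
have f1 : f 1 = 1 by case: fm.
have chain : forall e e', e <= e' -> f (p ^ e) <= f (p ^ e').
  move=> e e'; elim: e' => [|e' IH]; first by rewrite leqn0 => /eqP ->.
  rewrite leq_eqVlt ltnS => /orP [/eqP -> //|/IH H].
  by apply: leq_trans H (fmono p e'.+1 pp isT).
have S1 : 0 < S_f f n.
  by rewrite -f1; apply: le_mem; rewrite -dvdn_divisors // dvd1n.
have N0 : forall i, 0 < n * p ^ i by move=> i; rewrite muln_gt0 n0 expn_gt0 prime_gt0.
have SR := fun j => @Srec f n p j fm pp cop n0.
have Smono : forall j j', j <= j' -> S_f f (n * p ^ j) <= S_f f (n * p ^ j').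
  move=> j j'; elim: j' => [|j' IH]; first by rewrite leqn0 => /eqP ->.
  rewrite leq_eqVlt ltnS => /orP [/eqP -> //|/IH H].
  by rewrite SR; apply: leq_trans H (leq_addr _ _).
split.
- move=> prk i /andP [i1 ik]; rewrite leqNgt; apply/negP => Hgt.
  set T := S_f f (n * p ^ i.-1) in Hgt *.
  have mS : T + 1 <= S_f f (n * p ^ k).
    apply: leq_trans (Smono i k ik); rewrite -(prednK i1) SR (prednK i1).
    rewrite leq_add2l; apply: leq_trans (leq_pmulr _ S1).
    by apply: leq_trans (ltnW Hgt); rewrite addn1.
  have m0 : 0 < T + 1 by rewrite addn1.
  have [D [uD aD sD]] := prk _ m0 mS.
  have fxD : forall x, x \in D -> f x <= T + 1 by move=> x xD; rewrite -sD; apply: le_mem.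
  rewrite (bigID (fun x => x %| n * p ^ i.-1)) /= in sD.
  have H2 : \sum_(x <- D | ~~ (x %| n * p ^ i.-1)) f x = 0.
    rewrite big1_seq // => x /andP [nx xD].
    have xd : x %| n * p ^ k by move/allP: aD => /(_ x xD); rewrite -dvdn_divisors.
    have [a [e [xE an ek]]] := @decomp n p k x pp cop n0 xd.
    have ei : i <= e.
      by move: nx; rewrite xE mem2 // -ltnNge => h; rewrite -(prednK i1).
    apply/eqP; rewrite xE (@fmulp f n p a e fm pp cop n0 an) muln_eq0.
    apply/orP; left; apply/negPn/negP => fa0.
    have : f (p ^ e) <= f x by rewrite xE (@fmulp f n p a e fm pp cop n0 an) leq_pmull // lt0n.
    have := fxD x xD; have := chain _ _ ei; lia.
  rewrite H2 addn0 -big_filter in sD.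
  have : \sum_(x <- [seq x <- D | x %| n * p ^ i.-1]) f x <= T.
    apply: sum_sub; [exact: filter_uniq | exact: divisors_uniq |].
    by move=> x; rewrite mem_filter -dvdn_divisors // => /andP [].
  lia.
- move=> Hc.
  suff: forall j, j <= k -> f_practical f (n * p ^ j) by apply.
  elim=> [_|j IH jk]; first by rewrite expn0 muln1.
  have prj := IH (ltnW jk).
  set F := f (p ^ j.+1).
  have HF : F <= S_f f (n * p ^ j) + 1 by have := Hc j.+1; rewrite jk /=; apply.
  have F0 : 0 < F by have := chain 0 j.+1 isT; rewrite expn0 f1.
  move=> m m0; rewrite SR -/F => mS.
  set T := S_f f (n * p ^ j) in HF mS *.
  set S := S_f f n in mS.
  set q := minn (m %/ F) S.
  set r := m - q * F.
  have qF : q * F <= m.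
    by apply: leq_trans (leq_divM m F); rewrite leq_mul2r geq_minl orbT.
  have rT : r <= T.
    case: (leqP (m %/ F) S) => h.
      rewrite /r /q (minn_idPl h); have := ltn_pmod m F0; have := divn_eq m F; lia.
    rewrite /r /q (minn_idPr (ltnW h)); lia.
  have [D1 [u1 a1 s1]] := @rep f _ _ prj rT.
  have [D2 [u2 a2 s2]] := @rep f _ _ prn (geq_minr _ _ : q <= S).
  have dD2 : forall d, d \in D2 -> d %| n.
    by move=> d dD; have := allP a2 d dD; rewrite -dvdn_divisors.
  exists (D1 ++ map (fun d => d * p ^ j.+1) D2); split.
  + rewrite cat_uniq u1 map_inj_uniq ?u2; last first.
      by move=> a b /eqP; rewrite eqn_pmul2r ?expn_gt0 ?prime_gt0 // => /eqP.
    rewrite andbT /=; apply/hasPn => y /mapP [d dD ->]; apply/negP => /(allP a1).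
    by rewrite -dvdn_divisors // mem2 ?ltnn // dD2.
  + rewrite all_cat; apply/andP; split.
      apply/allP => x /(allP a1); rewrite -!dvdn_divisors // => h.
      by apply: dvdn_trans h _; rewrite dvdn_mul // dvdn_exp2l.
    apply/allP => y /mapP [d dD ->].
    by rewrite -dvdn_divisors // dvdn_mul // dD2.
  + rewrite big_cat big_map s1 /=.
    have -> : \sum_(d <- D2) f (d * p ^ j.+1) = q * F.
      rewrite -s2 big_distrl /= big_seq [in RHS]big_seq; apply: eq_bigr => d dD.
      by rewrite (@fmulp f n p d j.+1 fm pp cop n0 (dD2 d dD)).
    by rewrite /r subnK.
Qed.
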